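(* Let $\mathbb C$ be a homological category with finite colimits, and let $x\colon X\to A$, $y\colon Y\to A$ be morphisms whose images are normal monomorphisms. If $m$ is an internal multiplication $X\times Y\to A$ over $(A,1_A)$ and $p\colon A_3\to A$ is a morphism with $p\gamma_1=m$, then $p$ is an internal pregroupoid structure on the span $A/X\leftarrow A\to A/Y$.
   Context: A homological category is a regular pointed category in which the Split Short Five Lemma holds; images are taken in the (regular epi, mono) factorization; a normal monomorphism is a kernel of some morphism. Notation: $\iota_i$ coproduct injections, $[a,b]$ copairing, $\langle\cdot\rangle$ pairing. $(A+X)\times_A(A+Y)$ is the pullback of $[1,0]\colon A+X\to A$ and $[1,0]\colon A+Y\to A$, with projections $\pi_1,\pi_2$. An internal multiplication $X\times Y\to A$ over $(A,1_A)$ is a morphism $m\colon (A+X)\times_A(A+Y)\to A$ with $m\langle 1,\iota_1[1,0]\rangle=[1,x]$ and $m\langle\iota_1[1,0],1\rangle=[1,y]$. $A_3=A\times_{A/X}A\times_{A/Y}A$ is the limit of $A\xrightarrow{\mathsf{coker}(x)}A/X\xleftarrow{\mathsf{coker}(x)}A\xrightarrow{\mathsf{coker}(y)}A/Y\xleftarrow{\mathsf{coker}(y)}A$, and $\gamma_1=\langle [1,x]\pi_1,[1,0]\pi_1,[1,y]\pi_2\rangle$. An internal pregroupoid structure on the span $A/X\leftarrow A\to A/Y$ is a morphism $p\colon A_3\to A$ with $p\langle\pi_1,\pi_2,\pi_2\rangle=\pi_1$ on $A\times_{A/X}A$ and $p\langle\pi_1,\pi_1,\pi_2\rangle=\pi_2$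 on $A\times_{A/Y}A$ ($\pi_1,\pi_2$ the kernel-pair projections). *)

(* Defs.v *)
Set Implicit Arguments.
Unset Strict Implicit.

Record Category : Type := {
  Ob :> Type;
  Hom : Ob -> Ob -> Type;
  idm : forall A, Hom A A;
  comp : forall A B D, Hom B D -> Hom A B -> Hom A D;
  comp_id_l : forall A B (f : Hom A B), comp (idm B) f = f;
  comp_id_r : forall A B (f : Hom A B), comp f (idm A) = f;
  comp_assoc : forall A B D E (h : Hom D E) (g : Hom B D) (f : Hom A B),
      comp h (comp g f) = comp (comp h g) f
}.
Arguments Hom {c} _ _.
Arguments idm {c} A.
Arguments comp {c A B D} _ _.

Notation "g ∘ f" := (comp g f) (at level 40, left associativity).

Definition is_initial {C : Category} (I : C) : Prop :=
  forall B : C, exists f : Hom I B, forall g : Hom I B, g = f.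
Definition is_terminal {C : Category} (T : C) : Prop :=
  forall B : C, exists f : Hom B T, forall g : Hom B T, g = f.
Definition is_zero_object {C : Category} (Z : C) : Prop :=
  is_initial Z /\ is_terminal Z.

Definition is_zero {C : Category} {A B : C} (f : Hom A B) : Prop :=
  exists (Z : C) (a : Hom A Z) (b : Hom Z B), is_zero_object Z /\ f = b ∘ a.

Definition is_mono {C : Category} {A B : C} (f : Hom A B) : Prop :=
  forall (Z : C) (g h : Hom Z A), f ∘ g = f ∘ h -> g = h.
Definition is_iso {C : Category} {A B : C} (f : Hom A B) : Prop :=
  exists g : Hom B A, g ∘ f = idm A /\ f ∘ g = idm B.

Definition is_pullback {C : Category} {A B D P : C}
  (f : Hom A D) (g : Hom B D) (p1 : Hom P A) (p2 : Hom P B) : Prop :=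
  f ∘ p1 = g ∘ p2 /\
  forall (Z : C) (z1 : Hom Z A) (z2 : Hom Z B), f ∘ z1 = g ∘ z2 ->
    exists! u : Hom Z P, p1 ∘ u = z1 /\ p2 ∘ u = z2.

Definition is_kernel_pair {C : Category} {A B K : C}
  (f : Hom A B) (k1 k2 : Hom K A) : Prop := is_pullback f f k1 k2.

Definition is_coequalizer {C : Category} {A B Q : C}
  (f g : Hom A B) (q : Hom B Q) : Prop :=
  q ∘ f = q ∘ g /\
  forall (Z : C) (z : Hom B Z), z ∘ f = z ∘ g -> exists! u : Hom Q Z, u ∘ q = z.

Definition is_regular_epi {C : Category} {B Q : C} (q : Hom B Q) : Prop :=
  exists (A : C) (f g : Hom A B), is_coequalizer f g q.

Definition is_coproduct {C : Category} {A B S : C}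
  (i1 : Hom A S) (i2 : Hom B S) : Prop :=
  forall (Z : C) (a : Hom A Z) (b : Hom B Z),
    exists! u : Hom S Z, u ∘ i1 = a /\ u ∘ i2 = b.

Definition is_kernel {C : Category} {K A B : C} (k : Hom K A) (f : Hom A B) : Prop :=
  is_zero (f ∘ k) /\
  forall (Z : C) (z : Hom Z A), is_zero (f ∘ z) -> exists! u : Hom Z K, k ∘ u = z.

Definition is_cokernel {C : Category} {X A Q : C} (x : Hom X A) (c : Hom A Q) : Prop :=
  is_zero (c ∘ x) /\
  forall (Z : C) (z : Hom A Z), is_zero (z ∘ x) -> exists! u : Hom Q Z, u ∘ c = z.

Definition is_normal_mono {C : Category} {K A : C} (k : Hom K A) : Prop :=
  exists (B : C) (f : Hom A B), is_kernel k f.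

Definition is_pointed (C : Category) : Prop := exists Z : C, is_zero_object Z.

Definition finitely_complete (C : Category) : Prop :=
  (exists T : C, is_terminal T) /\
  (forall (A B D : C) (f : Hom A D) (g : Hom B D),
     exists (P : C) (p1 : Hom P A) (p2 : Hom P B), is_pullback f g p1 p2).

Definition is_regular (C : Category) : Prop :=
  finitely_complete C /\
  (forall (A B K : C) (f : Hom A B) (k1 k2 : Hom K A),
     is_kernel_pair f k1 k2 -> exists (Q : C) (q : Hom A Q), is_coequalizer k1 k2 q) /\
  (forall (A B D P : C) (f : Hom A D) (g : Hom B D) (p1 : Hom P A) (p2 : Hom P B),
     is_pullback f g p1 p2 -> is_regular_epi g -> is_regular_epi p1).

Definition split_short_five_lemma (C : Category) : Prop :=
  forall (K A B K' A' B' : C)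
    (k : Hom K A) (p : Hom A B) (s : Hom B A)
    (k' : Hom K' A') (p' : Hom A' B') (s' : Hom B' A')
    (u : Hom K K') (v : Hom A A') (w : Hom B B'),
    p ∘ s = idm B -> p' ∘ s' = idm B' ->
    is_kernel k p -> is_kernel k' p' ->
    v ∘ k = k' ∘ u -> p' ∘ v = w ∘ p -> v ∘ s = s' ∘ w ->
    is_iso u -> is_iso w -> is_iso v.

Definition is_homological (C : Category) : Prop :=
  is_pointed C /\ is_regular C /\ split_short_five_lemma C.

Definition has_finite_colimits (C : Category) : Prop :=
  (exists I : C, is_initial I) /\
  (forall A B : C, exists (S : C) (i1 : Hom A S) (i2 : Hom B S), is_coproduct i1 i2) /\
  (forall (A B : C) (f g : Hom A B), exists (Q : C) (q : Hom B Q), is_coequalizer f g q).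

Definition image_is_normal_mono {C : Category} {X A : C} (x : Hom X A) : Prop :=
  exists (I : C) (e : Hom X I) (i : Hom I A),
    x = i ∘ e /\ is_regular_epi e /\ is_mono i /\ is_normal_mono i.

Definition is_A3_limit {C : Category} {A QX QY A3 : C}
  (cx : Hom A QX) (cy : Hom A QY) (q1 q2 q3 : Hom A3 A) : Prop :=
  cx ∘ q1 = cx ∘ q2 /\ cy ∘ q2 = cy ∘ q3 /\
  forall (Z : C) (z1 z2 z3 : Hom Z A), cx ∘ z1 = cx ∘ z2 -> cy ∘ z2 = cy ∘ z3 ->
    exists! u : Hom Z A3, q1 ∘ u = z1 /\ q2 ∘ u = z2 /\ q3 ∘ u = z3.

(* Internal multiplication X x Y -> A over (A, 1_A).
   iX1, iX2 : coproduct injections of A+X; rX = [1,0], sX = [1,x] : A+X -> A;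
   likewise for Y; (P, pi1, pi2) = (A+X) x_A (A+Y).
   A morphism u with pi1 u = 1, pi2 u = iY1 rX is the pairing <1, iota_1 [1,0]>. *)
Definition is_internal_multiplication {C : Category} {A AX AY P : C}
  (iX1 : Hom A AX) (iY1 : Hom A AY)
  (rX sX : Hom AX A) (rY sY : Hom AY A)
  (pi1 : Hom P AX) (pi2 : Hom P AY) (m : Hom P A) : Prop :=
  (forall u : Hom AX P, pi1 ∘ u = idm AX -> pi2 ∘ u = iY1 ∘ rX -> m ∘ u = sX) /\
  (forall u : Hom AY P, pi1 ∘ u = iX1 ∘ rY -> pi2 ∘ u = idm AY -> m ∘ u = sY).

(* p : A3 -> A is an internal pregroupoid structure on A/X <- A -> A/Y:
   p <pi1,pi2,pi2> = pi1 on A x_{A/X} A and p <pi1,pi1,pi2> = pi2 on A x_{A/Y} A. *)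
Definition is_internal_pregroupoid {C : Category} {A QX QY A3 : C}
  (cx : Hom A QX) (cy : Hom A QY) (q1 q2 q3 : Hom A3 A) (p : Hom A3 A) : Prop :=
  (forall (K : C) (k1 k2 : Hom K A), is_kernel_pair cx k1 k2 ->
     forall h : Hom K A3, q1 ∘ h = k1 -> q2 ∘ h = k2 -> q3 ∘ h = k2 -> p ∘ h = k1) /\
  (forall (K : C) (k1 k2 : Hom K A), is_kernel_pair cy k1 k2 ->
     forall h : Hom K A3, q1 ∘ h = k1 -> q2 ∘ h = k1 -> q3 ∘ h = k2 -> p ∘ h = k2).

(* Main.v *)
Require Import Defs.


Lemma zero_in {C : Category} (Z : C) (HZ : is_zero_object Z) (B : C) (f g : Hom B Z) : f = g.
Proof. destruct HZ as [_ HT]. destruct (HT B) as [t Ht]. rewrite (Ht f), (Ht g). reflexivity. Qed.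

Lemma zero_out {C : Category} (Z : C) (HZ : is_zero_object Z) (B : C) (f g : Hom Z B) : f = g.
Proof. destruct HZ as [HI _]. destruct (HI B) as [t Ht]. rewrite (Ht f), (Ht g). reflexivity. Qed.

Lemma zero_unique {C : Category} {A B : C} (f g : Hom A B) : is_zero f -> is_zero g -> f = g.
Proof.
  intros [Z [a [b [HZ ->]]]] [Z' [a' [b' [HZ' ->]]]].
  pose proof HZ as HZ0. destruct HZ0 as [HI HT]. destruct (HI Z') as [t _].
  assert (E1: t ∘ a = a') by (apply (zero_in Z' HZ')).
  assert (E2: b = b' ∘ t) by (apply (zero_out Z HZ)).
  rewrite E2, <- comp_assoc, E1. reflexivity.
Qed.

Lemma zero_comp_l {C : Category} {A B D : C} (g : Hom B D) (f : Hom A B) :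
  is_zero f -> is_zero (g ∘ f).
Proof. intros [Z [a [b [HZ ->]]]]. exists Z, a, (g ∘ b). split; auto. apply comp_assoc. Qed.

Lemma zero_comp_r {C : Category} {A B D : C} (g : Hom B D) (f : Hom A B) :
  is_zero g -> is_zero (g ∘ f).
Proof. intros [Z [a [b [HZ ->]]]]. exists Z, (a ∘ f), b. split; auto. symmetry. apply comp_assoc. Qed.

Lemma zero_exists {C : Category} (HP : is_pointed C) (A B : C) : exists f : Hom A B, is_zero f.
Proof.
  destruct HP as [Z HZ]. pose proof HZ as [HI HT].
  destruct (HT A) as [a _], (HI B) as [b _]. exists (b ∘ a), Z, a, b. split; auto.
Qed.

Definition is_epi {C : Category} {A B : C} (f : Hom A B) : Prop :=
  forall (Z : C) (g h : Hom B Z), g ∘ f = h ∘ f -> g = h.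

Lemma regepi_epi {C : Category} {B Q : C} (q : Hom B Q) : is_regular_epi q -> is_epi q.
Proof.
  intros [A0 [f [g [Hc Hu]]]] Z u v E.
  destruct (Hu Z (u ∘ q)) as [w [_ Hw]].
  { rewrite <- !comp_assoc, Hc. reflexivity. }
  transitivity w; [symmetry; apply Hw; reflexivity | apply Hw; symmetry; exact E].
Qed.

Lemma zero_epi_cancel {C : Category} (HP : is_pointed C) {X I B : C} (e : Hom X I) (f : Hom I B) :
  is_epi e -> is_zero (f ∘ e) -> is_zero f.
Proof.
  intros He Hz. destruct (zero_exists HP I B) as [z0 Hz0].
  assert (f = z0) as -> ; [|exact Hz0].
  apply He. apply zero_unique; [exact Hz | apply zero_comp_r; exact Hz0].
Qed.

Lemma cop_ext {C : Category} {A B S Z : C} (i1 : Hom A S) (i2 : Hom B S) (H : is_coproduct i1 i2)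
  (u v : Hom S Z) : u ∘ i1 = v ∘ i1 -> u ∘ i2 = v ∘ i2 -> u = v.
Proof.
  intros E1 E2. destruct (H Z (u ∘ i1) (u ∘ i2)) as [w [_ Hw]].
  transitivity w; [symmetry|]; apply Hw; split; auto.
Qed.

Lemma equalizer_exists {C : Category} (HF : finitely_complete C) {K B : C} (f g : Hom K B) :
  exists (E : C) (e : Hom E K), f ∘ e = g ∘ e /\ is_mono e /\
    forall (Z : C) (z : Hom Z K), f ∘ z = g ∘ z -> exists u, e ∘ u = z.
Proof.
  destruct HF as [[T HT] HPB].
  destruct (HT K) as [tK HtK]. destruct (HT B) as [tB HtB].
  destruct (HPB _ _ _ tK tB) as [P0 [a [b [Hab HPu]]]].
  assert (Htf: tK ∘ idm K = tB ∘ f) by (transitivity tK; [apply HtK | symmetry; apply HtK]).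
  assert (Htg: tK ∘ idm K = tB ∘ g) by (transitivity tK; [apply HtK | symmetry; apply HtK]).
  destruct (HPu K (idm K) f Htf) as [sf [[Hsf1 Hsf2] _]].
  destruct (HPu K (idm K) g Htg) as [sg [[Hsg1 Hsg2] _]].
  destruct (HPB _ _ _ sf sg) as [E [e1 [e2 [HE HEu]]]].
  assert (He12: e1 = e2).
  { assert (H: a ∘ (sf ∘ e1) = a ∘ (sg ∘ e2)) by (rewrite HE; reflexivity).
    rewrite !comp_assoc, Hsf1, Hsg1, !comp_id_l in H. exact H. }
  subst e2.
  exists E, e1. split; [|split].
  - assert (H: b ∘ (sf ∘ e1) = b ∘ (sg ∘ e1)) by (rewrite HE; reflexivity).
    rewrite !comp_assoc, Hsf2, Hsg2 in H. exact H.
  - intros Z u1 u2 Hu.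
    assert (Hc: sf ∘ (e1 ∘ u1) = sg ∘ (e1 ∘ u1)) by (rewrite !comp_assoc, HE; reflexivity).
    destruct (HEu Z _ _ Hc) as [w0 [_ Hw0]].
    transitivity w0; [symmetry|]; apply Hw0; split; auto.
  - intros Z z Hz.
    assert (Hs: sf ∘ z = sg ∘ z).
    { destruct (HT Z) as [tZ HtZ].
      assert (Hc: tK ∘ z = tB ∘ (f ∘ z)) by (transitivity tZ; [apply HtZ | symmetry; apply HtZ]).
      destruct (HPu Z z (f ∘ z) Hc) as [w [_ Hw]].
      transitivity w; [symmetry|]; apply Hw; split; rewrite comp_assoc;
        try rewrite Hsf1; try rewrite Hsg1; try rewrite Hsf2; try rewrite Hsg2;
        try apply comp_id_l; try reflexivity; symmetry; exact Hz. }
    destruct (HEu Z z z Hs) as [u [[U1 _] _]]. exists u. exact U1.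
Qed.

Lemma joint_epi {C : Category} (HFC : finitely_complete C) (HS : split_short_five_lemma C)
  {I K A : C} (kap : Hom I K) (r : Hom K A) (d : Hom A K)
  (Hrd : r ∘ d = idm A) (Hk : is_kernel kap r) {B : C} (f g : Hom K B) :
  f ∘ d = g ∘ d -> f ∘ kap = g ∘ kap -> f = g.
Proof.
  intros Hd Hkap.
  destruct (equalizer_exists HFC f g) as [E [e [Hfe [Hmono Hu]]]].
  destruct (Hu _ d Hd) as [d' Hd'].
  destruct (Hu _ kap Hkap) as [k' Hk'].
  assert (Hiso: is_iso e).
  { apply (HS I E A I K A k' (r ∘ e) d' kap r d (idm I) e (idm A)).
    - rewrite <- comp_assoc, Hd'. exact Hrd.
    - exact Hrd.
    - split.
      + rewrite <- comp_assoc, Hk'. exact (proj1 Hk).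
      + intros Z z Hz. rewrite <- comp_assoc in Hz.
        destruct (proj2 Hk Z (e ∘ z) Hz) as [w [Hw Hwu]].
        exists w. split.
        * apply Hmono. rewrite comp_assoc, Hk'. exact Hw.
        * intros w' Hw'. apply Hwu. rewrite <- Hk', <- comp_assoc, Hw'. reflexivity.
    - exact Hk.
    - rewrite comp_id_r. exact Hk'.
    - rewrite comp_id_l. reflexivity.
    - rewrite comp_id_r. exact Hd'.
    - exists (idm I); split; apply comp_id_l.
    - exists (idm A); split; apply comp_id_l. }
  destruct Hiso as [e' [He1 He2]].
  rewrite <- (comp_id_r f), <- (comp_id_r g), <- He2, !comp_assoc, Hfe. reflexivity.
Qed.

Lemma key {C : Category} (HC : is_homological C) {X A Q K : C} (x : Hom X A) (c : Hom A Q)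
  (Hc : is_cokernel x c) (Hx : image_is_normal_mono x) (k1 k2 : Hom K A)
  (Hkp : is_kernel_pair c k1 k2) {B : C} (f g : Hom K B) :
  (forall d : Hom A K, k1 ∘ d = idm A -> k2 ∘ d = idm A -> f ∘ d = g ∘ d) ->
  (forall w : Hom X K, k1 ∘ w = x -> is_zero (k2 ∘ w) -> f ∘ w = g ∘ w) -> f = g.
Proof.
  intros Hd Hw.
  destruct HC as [HPt [[HFC _] HS]].
  destruct Hx as [I [e [i [Hxe [Hre [Him [B0 [f0 Hf0]]]]]]]].
  assert (He: is_epi e) by (apply regepi_epi; exact Hre).
  destruct Hkp as [Hkc Hpb].
  assert (Hci: is_zero (c ∘ i)).
  { apply (zero_epi_cancel HPt e _ He). rewrite <- comp_assoc, <- Hxe. exact (proj1 Hc). }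
  assert (Hik: forall Z (z : Hom Z A), is_zero (c ∘ z) -> exists u, i ∘ u = z).
  { intros Z z Hz.
    assert (Hf0x: is_zero (f0 ∘ x)).
    { rewrite Hxe, comp_assoc. apply zero_comp_r. exact (proj1 Hf0). }
    destruct (proj2 Hc _ f0 Hf0x) as [f' [Hf' _]].
    assert (Hz0: is_zero (f0 ∘ z)).
    { rewrite <- Hf', <- comp_assoc. apply zero_comp_l. exact Hz. }
    destruct (proj2 Hf0 _ z Hz0) as [u [Hu _]]. exists u; exact Hu. }
  destruct (zero_exists HPt I A) as [zIA HzIA].
  assert (Hcc: c ∘ i = c ∘ zIA) by (apply zero_unique; [exact Hci | apply zero_comp_l; exact HzIA]).
  destruct (Hpb _ i zIA Hcc) as [kap [[Hk1 Hk2] _]].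
  assert (Hcd: c ∘ idm A = c ∘ idm A) by reflexivity.
  destruct (Hpb _ (idm A) (idm A) Hcd) as [d [[Hd1 Hd2] _]].
  apply (joint_epi HFC HS kap k2 d Hd2).
  - split.
    + rewrite Hk2. exact HzIA.
    + intros Z z Hz.
      assert (Hcz: is_zero (c ∘ (k1 ∘ z))).
      { rewrite comp_assoc, Hkc, <- comp_assoc. apply zero_comp_l. exact Hz. }
      destruct (Hik _ _ Hcz) as [u Hu].
      exists u. split.
      * assert (Hcz2 : c ∘ (k1 ∘ z) = c ∘ (k2 ∘ z)) by (rewrite !comp_assoc, Hkc; reflexivity).
        destruct (Hpb _ _ _ Hcz2) as [v [_ Hv]].
        assert (E1: v = kap ∘ u).
        { apply Hv. split.
          - rewrite comp_assoc, Hk1. exact Hu.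
          - rewrite comp_assoc, Hk2. apply zero_unique; [apply zero_comp_r; exact HzIA | exact Hz]. }
        assert (E2: v = z) by (apply Hv; split; reflexivity).
        rewrite <- E1. exact E2.
      * intros u' Hu'. apply Him. rewrite Hu, <- Hk1, <- comp_assoc, Hu'. reflexivity.
  - apply Hd; assumption.
  - apply He. rewrite <- !comp_assoc. apply Hw.
    + rewrite comp_assoc, Hk1. symmetry. exact Hxe.
    + rewrite comp_assoc, Hk2. apply zero_comp_r. exact HzIA.
Qed.

Lemma kp_sym {C : Category} {A B K : C} (f : Hom A B) (k1 k2 : Hom K A) :
  is_kernel_pair f k1 k2 -> is_kernel_pair f k2 k1.
Proof.
  intros [E U]. split; [symmetry; exact E|].
  intros Z z1 z2 Hz. destruct (U Z z2 z1 (eq_sym Hz)) as [w [[W1 W2] Wu]].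
  exists w. split; [split; assumption|]. intros w' [A1 A2]. apply Wu; split; assumption.
Qed.

Lemma A3_ext {C : Category} {A QX QY A3 Z : C} (cx : Hom A QX) (cy : Hom A QY) (q1 q2 q3 : Hom A3 A)
  (H : is_A3_limit cx cy q1 q2 q3) (a b : Hom Z A3) :
  q1 ∘ a = q1 ∘ b -> q2 ∘ a = q2 ∘ b -> q3 ∘ a = q3 ∘ b -> a = b.
Proof.
  intros E1 E2 E3. destruct H as [F1 [F2 H]].
  destruct (H Z (q1 ∘ a) (q2 ∘ a) (q3 ∘ a)) as [w [_ Hw]].
  - rewrite !comp_assoc, F1. reflexivity.
  - rewrite !comp_assoc, F2. reflexivity.
  - transitivity w; [symmetry|]; apply Hw; auto.
Qed.

Theorem lemma1p7 (C : Category)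
  (HC : is_homological C) (HCol : has_finite_colimits C)
  (A X Y : C) (x : Hom X A) (y : Hom Y A)
  (Hx : image_is_normal_mono x) (Hy : image_is_normal_mono y)
  (* coproducts A+X, A+Y *)
  (AX : C) (iX1 : Hom A AX) (iX2 : Hom X AX) (HAX : is_coproduct iX1 iX2)
  (AY : C) (iY1 : Hom A AY) (iY2 : Hom Y AY) (HAY : is_coproduct iY1 iY2)
  (* rX = [1,0], sX = [1,x], rY = [1,0], sY = [1,y] *)
  (rX : Hom AX A) (HrX1 : rX ∘ iX1 = idm A) (HrX2 : is_zero (rX ∘ iX2))
  (sX : Hom AX A) (HsX1 : sX ∘ iX1 = idm A) (HsX2 : sX ∘ iX2 = x)
  (rY : Hom AY A) (HrY1 : rY ∘ iY1 = idm A) (HrY2 : is_zero (rY ∘ iY2))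
  (sY : Hom AY A) (HsY1 : sY ∘ iY1 = idm A) (HsY2 : sY ∘ iY2 = y)
  (* (A+X) x_A (A+Y) *)
  (P : C) (pi1 : Hom P AX) (pi2 : Hom P AY) (HP : is_pullback rX rY pi1 pi2)
  (m : Hom P A) (Hm : is_internal_multiplication iX1 iY1 rX sX rY sY pi1 pi2 m)
  (* cokernels A -> A/X, A -> A/Y *)
  (QX : C) (cx : Hom A QX) (Hcx : is_cokernel x cx)
  (QY : C) (cy : Hom A QY) (Hcy : is_cokernel y cy)
  (* A3 *)
  (A3 : C) (q1 q2 q3 : Hom A3 A) (HA3 : is_A3_limit cx cy q1 q2 q3)
  (p : Hom A3 A)
  (* p gamma_1 = m, gamma_1 = <[1,x] pi1, [1,0] pi1, [1,y] pi2> *)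
  (Hp : forall g : Hom P A3,
          q1 ∘ g = sX ∘ pi1 -> q2 ∘ g = rX ∘ pi1 -> q3 ∘ g = sY ∘ pi2 -> p ∘ g = m) :
  is_internal_pregroupoid cx cy q1 q2 q3 p.
Proof.
  pose proof HC as HC'. destruct HC' as [HPt _].
  assert (HcxX: cx ∘ sX = cx ∘ rX).
  { apply (cop_ext iX1 iX2 HAX).
    - rewrite <- !comp_assoc, HsX1, HrX1. reflexivity.
    - rewrite <- !comp_assoc, HsX2. apply zero_unique; [exact (proj1 Hcx) | apply zero_comp_l; exact HrX2]. }
  assert (HcyY: cy ∘ sY = cy ∘ rY).
  { apply (cop_ext iY1 iY2 HAY).
    - rewrite <- !comp_assoc, HsY1, HrY1. reflexivity.
    - rewrite <- !comp_assoc, HsY2. apply zero_unique; [exact (proj1 Hcy) | apply zero_comp_l; exact HrY2]. }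
  destruct HP as [HPc HPu].
  assert (H1: cx ∘ (sX ∘ pi1) = cx ∘ (rX ∘ pi1)) by (rewrite !comp_assoc, HcxX; reflexivity).
  assert (H2: cy ∘ (rX ∘ pi1) = cy ∘ (sY ∘ pi2)) by (rewrite HPc, !comp_assoc, HcyY; reflexivity).
  destruct (proj2 (proj2 HA3) P _ _ _ H1 H2) as [g1 [[G1 [G2 G3]] _]].
  pose proof (Hp g1 G1 G2 G3) as Hpg.
  assert (Hc1: rX ∘ idm AX = rY ∘ (iY1 ∘ rX)) by (rewrite comp_id_r, comp_assoc, HrY1, comp_id_l; reflexivity).
  destruct (HPu AX (idm AX) (iY1 ∘ rX) Hc1) as [u [[U1 U2] _]].
  pose proof (proj1 Hm u U1 U2) as Hmu.
  assert (T1: q1 ∘ (g1 ∘ u) = sX) by (rewrite comp_assoc, G1, <- comp_assoc, U1, comp_id_r; reflexivity).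
  assert (T2: q2 ∘ (g1 ∘ u) = rX) by (rewrite comp_assoc, G2, <- comp_assoc, U1, comp_id_r; reflexivity).
  assert (T3: q3 ∘ (g1 ∘ u) = rX) by (rewrite comp_assoc, G3, <- comp_assoc, U2, comp_assoc, HsY1, comp_id_l; reflexivity).
  assert (Tp: p ∘ (g1 ∘ u) = sX) by (rewrite comp_assoc, Hpg, Hmu; reflexivity).
  assert (Hc2: rX ∘ (iX1 ∘ rY) = rY ∘ idm AY) by (rewrite comp_id_r, comp_assoc, HrX1, comp_id_l; reflexivity).
  destruct (HPu AY (iX1 ∘ rY) (idm AY) Hc2) as [u' [[U1' U2'] _]].
  pose proof (proj2 Hm u' U1' U2') as Hmu'.
  assert (T1': q1 ∘ (g1 ∘ u') = rY) by (rewrite comp_assoc, G1, <- comp_assoc, U1', comp_assoc, HsX1, comp_id_l; reflexivity).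
  assert (T2': q2 ∘ (g1 ∘ u') = rY) by (rewrite comp_assoc, G2, <- comp_assoc, U1', comp_assoc, HrX1, comp_id_l; reflexivity).
  assert (T3': q3 ∘ (g1 ∘ u') = sY) by (rewrite comp_assoc, G3, <- comp_assoc, U2', comp_id_r; reflexivity).
  assert (Tp': p ∘ (g1 ∘ u') = sY) by (rewrite comp_assoc, Hpg, Hmu'; reflexivity).
  rewrite comp_assoc in T1, T2, T3, T1', T2', T3'.
  split.
  - intros K k1 k2 Hkp h E1 E2 E3.
    apply (key HC x cx Hcx Hx k1 k2 Hkp (p ∘ h) k1).
    + intros d D1 D2. rewrite D1.
      assert (Hh: h ∘ d = (g1 ∘ u) ∘ iX1).
      { apply (A3_ext cx cy q1 q2 q3 HA3); rewrite !comp_assoc.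
        - rewrite E1, T1, D1, HsX1. reflexivity.
        - rewrite E2, T2, D2, HrX1. reflexivity.
        - rewrite E3, T3, D2, HrX1. reflexivity. }
      rewrite <- comp_assoc, Hh, comp_assoc, Tp, HsX1. reflexivity.
    + intros w W1 W2. rewrite W1.
      assert (Hh: h ∘ w = (g1 ∘ u) ∘ iX2).
      { apply (A3_ext cx cy q1 q2 q3 HA3); rewrite !comp_assoc.
        - rewrite E1, T1, W1, HsX2. reflexivity.
        - rewrite E2, T2. apply zero_unique; assumption.
        - rewrite E3, T3. apply zero_unique; assumption. }
      rewrite <- comp_assoc, Hh, comp_assoc, Tp, HsX2. reflexivity.
  - intros K k1 k2 Hkp h E1 E2 E3.
    apply (key HC y cy Hcy Hy k2 k1 (kp_sym cy k1 k2 Hkp) (p ∘ h) k2).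
    + intros d D2 D1. rewrite D2.
      assert (Hh: h ∘ d = (g1 ∘ u') ∘ iY1).
      { apply (A3_ext cx cy q1 q2 q3 HA3); rewrite !comp_assoc.
        - rewrite E1, T1', D1, HrY1. reflexivity.
        - rewrite E2, T2', D1, HrY1. reflexivity.
        - rewrite E3, T3', D2, HsY1. reflexivity. }
      rewrite <- comp_assoc, Hh, comp_assoc, Tp', HsY1. reflexivity.
    + intros w W2 W1. rewrite W2.
      assert (Hh: h ∘ w = (g1 ∘ u') ∘ iY2).
      { apply (A3_ext cx cy q1 q2 q3 HA3); rewrite !comp_assoc.
        - rewrite E1, T1'. apply zero_unique; assumption.
        - rewrite E2, T2'. apply zero_unique; assumption.
        - rewrite E3, T3', W2, HsY2. reflexivity. }
      rewrite <- comp_assoc, Hh, comp_assoc, Tp', HsY2. reflexivity.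
Qed.
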